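(* Let $A$ be a finite set, $\rho\subseteq A^n$, $(a_1,\dots,a_n)\in A^n\setminus\rho$, and $b_1,\dots,b_n\in A$ with $b_i\neq a_i$ for all $i$, such that $$(\{a_1,b_1\}\times\{a_2,b_2\}\times\dots\times\{a_n,b_n\})\setminus\{(a_1,\dots,a_n)\}\subseteq\rho.$$ Then $\rho$ is a key relation and $(a_1,\dots,a_n)$ is a key tuple for $\rho$.
   Context: A unary vector-function is a tuple $\Psi=(\psi_1,\dots,\psi_n)$ of maps $\psi_i:A\to A$ acting coordinatewise; it preserves $\rho$ if $\Psi(\rho)\subseteq\rho$. $\rho\subseteq A^n$ is a key relation if there is $\beta\in A^n\setminus\rho$ (a key tuple) such that every $\alpha\in A^n\setminus\rho$ is mapped to $\beta$ by some unary vector-function preserving $\rho$. *)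

(* Defs.v *)
From mathcomp Require Import all_boot.
Set Implicit Arguments. Unset Strict Implicit. Unset Printing Implicit Defensive.


Definition apply_vf (A : finType) (n : nat) (Psi : 'I_n -> A -> A)
  (x : {ffun 'I_n -> A}) : {ffun 'I_n -> A} := [ffun i => Psi i (x i)].

Definition preserves (A : finType) (n : nat) (Psi : 'I_n -> A -> A)
  (rho : {set {ffun 'I_n -> A}}) : Prop :=
  forall x, x \in rho -> apply_vf Psi x \in rho.

Definition key_tuple (A : finType) (n : nat) (rho : {set {ffun 'I_n -> A}})
  (beta : {ffun 'I_n -> A}) : Prop :=
  beta \notin rho /\
  forall alpha : {ffun 'I_n -> A}, alpha \notin rho ->
    exists Psi : 'I_n -> A -> A, preserves Psi rho /\ apply_vf Psi alpha = beta.

Definition key_relation (A : finType) (n : nat) (rho : {set {ffun 'I_n -> A}}) : Prop :=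
  exists beta, key_tuple rho beta.

(* Main.v *)
Require Import Defs.
From mathcomp Require Import all_boot.

Theorem mainTheorem5 (A : finType) (n : nat) (rho : {set {ffun 'I_n -> A}})
  (a b : {ffun 'I_n -> A})
  (ha : a \notin rho)
  (hb : forall i, b i != a i)
  (hbox : forall x : {ffun 'I_n -> A},
      (forall i, (x i == a i) || (x i == b i)) -> x != a -> x \in rho) :
  key_relation rho /\ key_tuple rho a.
Proof.
have kt : key_tuple rho a.
  split => // alpha halpha.
  exists (fun i y => if y == alpha i then a i else b i); split.
    move=> x hx; apply: hbox.
      by move=> i; rewrite /apply_vf ffunE; case: ifP => _; rewrite eqxx ?orbT.
    apply/negP => /eqP E.
    have xa : x = alpha.
      apply/ffunP => i; move/ffunP: E => /(_ i).
      rewrite /apply_vf ffunE /=; case: eqP => // _ Hb.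
      by move: (hb i); rewrite Hb eqxx.
    by move: halpha; rewrite -xa hx.
  by apply/ffunP => i; rewrite /apply_vf ffunE eqxx.
by split => //; exists a.
Qed.
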